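(* Under the hypotheses below, if $|r_i|=|r_j|$ then $|\sigma_a(r_i)|=|\sigma_a(r_j)|$ for every nonzero $a\in\mathcal M$.
   Context: $\mathcal M$ denotes the $\mathbb Q$-vector space $\mathbb Q^{<\omega}$ of all sequences of rationals with only finitely many nonzero terms, with zero vector $\vec 0$; a relation is definable if it is first-order definable without parameters in $\langle\mathcal M;+\rangle$. Let $n\ge1$, let $r_1,\dots,r_n$ be pairwise distinct rationals with $r_i\notin\{0,1\}$, and let $R$ be a definable binary relation such that for all $x\ne\vec 0$ and all $y$: $R(x,y)\iff y\in\{r_1x,\dots,r_nx\}$. Let $\varphi$ be a permutation of $\mathcal M$ preserving $R$ (i.e. $R(a,b)\iff R(\varphi(a),\varphi(b))$). Then $\varphi(\vec 0)=\vec 0$ and for every nonzero $a$ there is a unique permutation $\sigma_a$ of $\{r_1,\dots,r_n\}$ with $\varphi(r_ia)=\sigma_a(r_i)\varphi(a)$ for all $i$; this is the $\sigma_a$ in the claim. *)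

(* Defs.v *)
From HB Require Import structures.
From mathcomp Require Import all_boot all_order all_algebra all_fingroup.
Set Implicit Arguments. Unset Strict Implicit. Unset Printing Implicit Defensive.
Import Order.TTheory GRing.Theory Num.Theory.
Local Open Scope ring_scope.

(* The Q-vector space M = Q^{<omega}: rational sequences with finite support. *)
Definition fin_supp (f : nat -> rat) : Prop :=
  exists N : nat, forall k : nat, (N <= k)%N -> f k = 0.

Definition M : Type := {f : nat -> rat | fin_supp f}.

Definition Mval (x : M) : nat -> rat := proj1_sig x.

Lemma fin_supp0 : fin_supp (fun _ => 0).
Proof. by exists 0%N. Qed.

Lemma fin_suppD (f g : nat -> rat) :
  fin_supp f -> fin_supp g -> fin_supp (fun k => f k + g k).
Proof.
move=> [N1 H1] [N2 H2]; exists (maxn N1 N2) => k Hk.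
rewrite H1 ?H2 ?addr0 //.
- by apply: leq_trans Hk; rewrite leq_maxr.
- by apply: leq_trans Hk; rewrite leq_maxl.
Qed.

Lemma fin_suppZ (q : rat) (f : nat -> rat) :
  fin_supp f -> fin_supp (fun k => q * f k).
Proof. by move=> [N H]; exists N => k Hk; rewrite H ?mulr0. Qed.

Definition zeroM : M := exist _ (fun _ => 0) fin_supp0.
Definition addM (x y : M) : M :=
  exist _ (fun k => Mval x k + Mval y k) (fin_suppD (proj2_sig x) (proj2_sig y)).
Definition scaleM (q : rat) (x : M) : M :=
  exist _ (fun k => q * Mval x k) (fin_suppZ q (proj2_sig x)).

Inductive term : Type :=
| TVar of nat
| TAdd of term & term.

Inductive formula : Type :=
| FEq of term & term
| FNot of formula
| FAnd of formula & formula
| FOr of formula & formula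
| FEx of nat & formula
| FAll of nat & formula.

Definition upd (e : nat -> M) (k : nat) (m : M) : nat -> M :=
  fun j => if j == k then m else e j.

Fixpoint teval (e : nat -> M) (t : term) : M :=
  match t with
  | TVar k => e k
  | TAdd t1 t2 => addM (teval e t1) (teval e t2)
  end.

Fixpoint sat (e : nat -> M) (f : formula) : Prop :=
  match f with
  | FEq t1 t2 => teval e t1 = teval e t2
  | FNot g => ~ sat e g
  | FAnd g h => sat e g /\ sat e h
  | FOr g h => sat e g \/ sat e h
  | FEx k g => exists m : M, sat (upd e k m) g
  | FAll k g => forall m : M, sat (upd e k m) g
  end.

Definition definable2 (R : M -> M -> Prop) : Prop :=
  exists f : formula, forall (e : nat -> M) (x y : M),
    sat (upd (upd e 0%N x) 1%N y) f <-> R x y.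

(* Main.v *)
Require Import Defs.
From HB Require Import structures.
From mathcomp Require Import all_boot all_order all_algebra all_fingroup.
From mathcomp Require Import ring lra zify.
From Stdlib Require Import ProofIrrelevance FunctionalExtensionality ClassicalEpsilon Classical.
Import Order.TTheory GRing.Theory Num.Theory.
Local Open Scope ring_scope.

Lemma Meq (x y : M) : (forall k, Mval x k = Mval y k) -> x = y.
Proof.
move=> H; apply: eq_sig_hprop; first by move=> ? ? ?; apply: proof_irrelevance.
by apply: functional_extensionality.
Qed.

Lemma scaleM_scale q q' x : scaleM q (scaleM q' x) = scaleM (q * q') x.
Proof. by apply: Meq => k /=; rewrite mulrA. Qed.

Lemma scaleM1 x : scaleM 1 x = x.
Proof. by apply: Meq => k /=; rewrite mul1r. Qed.

Lemma scaleM0v q : scaleM q zeroM = zeroM.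
Proof. by apply: Meq => k /=; rewrite mulr0. Qed.

Lemma Mnz {x} : x <> zeroM -> exists k, Mval x k <> 0.
Proof.
move=> hx; apply: NNPP => hn; apply: hx; apply: Meq => k /=.
by apply: NNPP => hk; apply: hn; exists k.
Qed.

Lemma scaleM_eq {q q' x} : x <> zeroM -> scaleM q x = scaleM q' x -> q = q'.
Proof.
move=> /Mnz [k hk] /(f_equal (fun z => Mval z k)) /= /eqP.
by rewrite -subr_eq0 -mulrBl mulf_eq0 subr_eq0 (negPf (introN eqP hk)) orbF => /eqP.
Qed.

Lemma scale0M x : scaleM 0 x = zeroM.
Proof. by apply: Meq => k /=; rewrite mul0r. Qed.

Lemma scaleM_nz {q x} : q != 0 -> x <> zeroM -> scaleM q x <> zeroM.
Proof.
move=> hq hx h0; move: hq; rewrite (scaleM_eq hx (etrans h0 (esym (scale0M x)))).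
by rewrite eqxx.
Qed.


Fixpoint cntE {n} (r : 'I_n -> rat) (P : pred 'I_n) (m : nat) (x y : rat) : nat :=
  if m is m'.+1 then (\sum_(k < n | P k) cntE r P m' (r k * x) y)%N else (x == y : nat).

Lemma split2 {n i j} (hij : i != j) (F : 'I_n -> nat) :
  (\sum_(k < n | predT k) F k = F i + F j + \sum_(k < n | [pred k | (k != i) && (k != j)] k) F k)%N.
Proof.
rewrite (bigD1 i) //= (bigD1 j) /=; last by rewrite eq_sym.
by rewrite addnA; congr (_ + _ + _)%N; apply: eq_bigl => k /=.
Qed.

Lemma flip n (r : 'I_n -> rat) i j (hij : i != j) (hr : r j = - r i) m x y :
  (cntE r predT m x y <= cntE r predT m (- x) y + cntE r [pred k | (k != i) && (k != j)] m x y)%N.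
Proof.
elim: m x => [|m IH] x /=; first by rewrite leq_addl.
rewrite !(split2 hij) hr !mulrN !mulNr opprK.
have H : (\sum_(k < n | [pred k0 | k0 != i & k0 != j] k) cntE r predT m (r k * x) y <=
   \sum_(k < n | [pred k0 | k0 != i & k0 != j] k) cntE r predT m (- (r k * x)) y +
   \sum_(k < n | [pred k0 | k0 != i & k0 != j] k) cntE r [pred k0 | k0 != i & k0 != j] m (r k * x) y)%N.
  by rewrite -big_split; apply: leq_sum => k _; apply: IH.
under [X in (_ <= _ + X + _)%N]eq_bigr => k _ do rewrite mulrN.
move: H; rewrite /= => H.
rewrite [X in (X + _ <= _)%N]addnC -!addnA leq_add2l leq_add2l.
exact: H.
Qed.

Lemma cntE_bound n (r : 'I_n -> rat) P m x y : (cntE r P m x y <= #|P| ^ m)%N.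
Proof.
elim: m x => [|m IH] x /=; first by case: (x == y).
rewrite expnS -sum_nat_const; apply: leq_sum => k _; exact: IH.
Qed.

Lemma cntE_scale n (r : 'I_n -> rat) P m c x y : c != 0 ->
  cntE r P m (c * x) (c * y) = cntE r P m x y.
Proof.
move=> hc; elim: m x => [|m IH] x /=.
  by rewrite (inj_eq (mulfI hc)).
by apply: eq_bigr => k _; rewrite mulrCA IH.
Qed.

Lemma sum_pos n (P : pred 'I_n) (F : 'I_n -> nat) :
  (0 < \sum_(k < n | P k) F k)%N -> exists2 k, P k & (0 < F k)%N.
Proof.
case: (pickP (fun k => P k && (0 < F k))%N) => [k /andP[h1 h2] _| H0]; first by exists k.
rewrite big1 // => k Pk; move: (H0 k); rewrite Pk /=; case: (F k) => // ? ; rewrite ltn0Sn.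
Qed.

Lemma cnt_pos_le n (r : 'I_n -> rat) (P : pred 'I_n) m x y k : P k ->
  (cntE r P m (r k * x) y <= cntE r P m.+1 x y)%N.
Proof. by move=> Pk /=; rewrite (bigD1 k) //= leq_addr. Qed.

Lemma cnt_supp n (r : 'I_n -> rat) (P : pred 'I_n) m x y : (0 < cntE r P m x y)%N ->
  exists c : 'I_n -> nat, (forall k, (c k <= m)%N) /\ y = x * \prod_(k < n) r k ^+ c k.
Proof.
elim: m x => [|m IH] x /=.
  case: eqP => // -> _; exists (fun _ => 0%N); split; first by [].
  by rewrite big1 ?mulr1 // => k _; rewrite expr0.
move/sum_pos => [k Pk /IH [c [hc ->]]].
exists (fun k' => c k' + (k' == k))%N; split.
  by move=> k'; rewrite -addn1 leq_add //; case: (k' == k).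
rewrite (bigD1 k) //= [in RHS](bigD1 k) //= eqxx addn1 exprS.
rewrite [in RHS](eq_bigr (fun k' => r k' ^+ c k')); last by move=> k' /negPf ->; rewrite addn0.
by rewrite -!mulrA; apply: mulrCA.
Qed.

Lemma cnt_abs n (r : 'I_n -> rat) (P : pred 'I_n) (mu Mx : rat) (hmu : 0 <= mu)
  (hb : forall k, mu <= `|r k| <= Mx) m x y : (0 < cntE r P m x y)%N ->
  mu ^+ m * `|x| <= `|y| <= Mx ^+ m * `|x|.
Proof.
elim: m x => [|m IH] x /=.
  by case: eqP => // -> _; rewrite !expr0 !mul1r lexx.
move/sum_pos => [k Pk /IH /andP [h1 h2]].
have /andP[hk1 hk2] := hb k.
have hM : 0 <= Mx by apply: le_trans hk2; apply: le_trans hk1.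
rewrite normrM in h1 h2; rewrite !exprSr -!mulrA; apply/andP; split.
  apply: le_trans h1; rewrite ler_wpM2l ?exprn_ge0 // ler_wpM2r //.
apply: le_trans h2 _; rewrite ler_wpM2l ?exprn_ge0 // ler_wpM2r //.
Qed.

Lemma cnt_mass n (r : 'I_n -> rat) m x (V : seq rat) : uniq V ->
  (forall y, (0 < cntE r predT m x y)%N -> y \in V) ->
  (\sum_(y <- V) cntE r predT m x y = n ^ m)%N.
Proof.
elim: m x V => [|m IH] x V hV hsub /=.
  have xV : x \in V by apply: hsub; rewrite /= eqxx.
  rewrite expn0; have <- : (count_mem x V = 1)%N by rewrite count_uniq_mem // xV.
  rewrite -sum1_count [RHS]big_mkcond /=; apply: eq_bigr => y _.
  by rewrite eq_sym; case: (y == x).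
rewrite exchange_big /=.
transitivity (\sum_(k < n) n ^ m)%N; last first.
  by rewrite -(big_mkord xpredT (fun _ => n ^ m)%N) sum_nat_const_nat subn0 expnS.
apply: eq_bigr => k _; apply: IH => // y hy; apply: hsub.
exact: (leq_trans hy (cnt_pos_le n r predT m x y k isT)).
Qed.

Lemma transport n (r : 'I_n -> rat) (r_inj : injective r) (Good : rat -> Prop) (Psi : rat -> rat)
 (G0 : forall x, Good x -> x != 0)
 (G1 : forall x k, Good x -> Good (r k * x))
 (G2 : forall x x', Good x -> Good x' -> Psi x = Psi x' -> x = x')
 (G3 : forall x k, Good x -> exists l, Psi (r k * x) = r l * Psi x) :
 forall m x y, Good x -> Good y -> cntE r predT m (Psi x) (Psi y) = cntE r predT m x y.
Proof.
move=> m; elim: m => [|m IH] x y gx gy /=.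
  by congr (nat_of_bool _); apply/eqP/eqP => [/G2 -> //|->].
pose pi k := odflt k [pick l | Psi (r k * x) == r l * Psi x].
have hpi k : Psi (r k * x) = r (pi k) * Psi x.
  rewrite /pi; case: pickP => [l /eqP //|H].
  by have [l hl] := G3 x k gx; move: (H l); rewrite hl eqxx.
have pi_inj : injective pi.
  move=> k1 k2 h; apply: r_inj; apply: (mulIf (G0 _ gx)).
  by apply: G2; rewrite ?hpi ?h //; apply: G1.
rewrite (reindex_inj pi_inj) /=; apply: eq_bigr => k _.
by rewrite -hpi IH //; apply: G1.
Qed.

Lemma transport_ex n (r : 'I_n -> rat) (Good : rat -> Prop) (Psi : rat -> rat)
 (G1 : forall x k, Good x -> Good (r k * x))
 (G4 : forall x l, Good x -> exists k, Psi (r k * x) = r l * Psi x) :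
 forall m x y', Good x -> (0 < cntE r predT m (Psi x) y')%N -> exists y, Good y /\ Psi y = y'.
Proof.
move=> m; elim: m => [|m IH] x y' gx /=.
  by case: eqP => // <- _; exists x.
move/sum_pos => [l _ hl]; have [k hk] := G4 x l gx.
by apply: (IH (r k * x)); [apply: G1 | rewrite hk].
Qed.


Lemma bernoulli (q : rat) (L : nat) : 1 <= q -> 1 + L%:R * (q - 1) <= q ^+ L.
Proof.
move=> hq; elim: L => [|L IH]; first by rewrite mul0r addr0 expr0.
rewrite exprS -natr1; have h0 : 0 <= q ^+ L by apply: exprn_ge0; lra.
have hL : 0 <= L%:R :> rat by apply: ler0n.
have h1 : q * (1 + L%:R * (q - 1)) <= q * q ^+ L by apply: ler_wpM2l => //; lra.
have h2 : 0 <= L%:R * (q - 1) * (q - 1) by apply: mulr_ge0; [apply: mulr_ge0|]; lra.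
nra.
Qed.

Lemma pow_unbounded (q C : rat) : 1 < q -> exists L : nat, C < q ^+ L.
Proof.
move=> hq; have hq1 : 0 < q - 1 by lra.
have h := archi_boundP (normr_ge0 (C / (q - 1))).
set L := Num.Def.archi_bound _ in h; exists L.
apply: lt_le_trans (bernoulli q L (ltW hq)).
have : C / (q - 1) < L%:R by apply: le_lt_trans h; apply: ler_norm.
rewrite ltr_pdivrMr //; lra.
Qed.

Lemma pow2_sq j : (4 <= j)%N -> (j * j <= 2 ^ j)%N.
Proof.
elim: j => // j IH; rewrite leq_eqVlt => /orP [/eqP <- //|hj].
have := IH hj; rewrite expnS; nia.
Qed.

Lemma poly_exp (Q d : nat) : exists k, (0 < k)%N /\ (Q * k ^ d < 2 ^ k)%N.
Proof.
set j := (d + Q + 4)%N.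
have hj : (j * d + Q.+1 <= 2 ^ j)%N.
  apply: (leq_trans _ (pow2_sq j _)); rewrite /j; nia.
exists (2 ^ j)%N; split; first by rewrite expn_gt0.
rewrite -expnM mulnC.
apply: (leq_trans _ (leq_pexp2l (isT : (0 < 2)%N) hj)).
rewrite expnD ltn_pmul2l ?expn_gt0 // expnS.
have := ltn_expl Q (isT : (1 < 2)%N); lia.
Qed.

Lemma leq_powl a b e : (a <= b)%N -> (a ^ e <= b ^ e)%N.
Proof. by move=> h; elim: e => // e IH; rewrite !expnS leq_mul. Qed.

Lemma arith n B L : (B < n)%N -> exists m, (0 < m)%N /\ (m.+1 ^ n * (L * m * B ^ m) < n ^ m)%N.
Proof.
case: n => // c hB; rewrite ltnS in hB.
case: c hB => [|c1] hB.
  by exists 1%N; split => //; move: hB; rewrite leqn0 => /eqP ->; rewrite !muln0.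
set c := c1.+1.
have F1 t : (c ^ t * (c + t) <= c * c.+1 ^ t)%N.
  elim: t => [|t IH]; first by rewrite !expn0 mul1n muln1 addn0.
  rewrite !expnS; have h : (c ^ t <= c.+1 ^ t)%N by apply: leq_powl.
  nia.
have F2 : (2 * c ^ c <= c.+1 ^ c)%N.
  have := F1 c; rewrite (_ : (c + c = 2 * c)%N); last by lia.
  by rewrite mulnCA mulnA [(c * _)%N]mulnC leq_pmul2r.
have F3 k : (2 ^ k * c ^ (c * k) <= c.+1 ^ (c * k))%N.
  by rewrite !expnM -expnMn; apply: leq_powl.
have [k [hk hQ]] := poly_exp (L * c.+1 ^ c.+2) c.+2.
exists (c * k)%N; split; first by rewrite muln_gt0 hk.
have hm1 : ((c * k).+1 <= c.+1 * k)%N by nia.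
have hm2 : (B ^ (c * k) <= c ^ (c * k))%N by apply: leq_powl.
have hm3 : ((c * k).+1 ^ c.+1 <= c.+1 ^ c.+1 * k ^ c.+1)%N by rewrite -expnMn; apply: leq_powl.
have hc : (0 < c ^ (c * k))%N by rewrite expn_gt0.
apply: (leq_ltn_trans (n := (L * c.+1 ^ c.+2 * k ^ c.+2 * c ^ (c * k))%N)).
  have hm : (c * k <= c.+1 * k)%N by rewrite leq_mul2r leqnSn orbT.
  apply: leq_trans (leq_mul hm3 (leq_mul (leq_mul (leqnn L) hm) hm2)) _.
  rewrite [(c.+1 ^ c.+2)%N]expnS [(k ^ c.+2)%N]expnS; nia.
apply: (leq_trans _ (F3 k)); rewrite ltn_pmul2r //.
Qed.


Lemma sum_const_seq (V : seq rat) (C : nat) : (\sum_(y <- V) C = size V * C)%N.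
Proof. by elim: V => [|y V IH]; rewrite ?big_nil // big_cons IH mulSn. Qed.

Lemma key n (r : 'I_n -> rat) (hn : (0 < n)%N) (r0 : forall k, r k != 0) (B : nat) (hB : (B < n)%N)
  (rho : rat) (hrho : 1 < `|rho|)
  (H : forall m z, (cntE r predT m 1 z <= cntE r predT m 1 (z * rho) + B ^ m)%N) : False.
Proof.
pose X m z := cntE r predT m 1 z.
set Mx := \sum_(k < n) `|r k|.
set S := \sum_(k < n) `|r k|^-1.
have rpos k : 0 < `|r k| by rewrite normr_gt0.
have Sge k : `|r k|^-1 <= S.
  rewrite /S (bigD1 k) //=.
  have : 0 <= \sum_(i < n | i != k) `|r i|^-1 by apply: sumr_ge0 => i _; rewrite invr_ge0.
  lra.
have hS : 0 < S by apply: lt_le_trans (Sge (Ordinal hn)); rewrite invr_gt0.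
set mu := S^-1.
have hmu : 0 < mu by rewrite invr_gt0.
have hb k : mu <= `|r k| <= Mx.
  apply/andP; split.
    by rewrite /mu -[`|r k|]invrK lef_pV2 ?posrE ?invr_gt0.
  rewrite /Mx (bigD1 k) //=.
  have : 0 <= \sum_(i < n | i != k) `|r i| by apply: sumr_ge0 => i _.
  lra.
have [L hL] := pow_unbounded _ (Mx / mu) hrho.
have iter (m K : nat) (z : rat) : (X m z <= X m (z * rho ^+ K)%R + K * B ^ m)%N.
  elim: K z => [|K IH] z; first by rewrite expr0 mulr1 addn0.
  have h1 := H m z; have h2 := IH (z * rho); rewrite exprS mulrA mulSn.
  rewrite /X in h1 h2 *; lia.
have bound (m : nat) (z : rat) : (0 < m)%N -> (X m z <= L * m * B ^ m)%N.
  move=> hm; case: (posnP (X m z)) => [-> //|hz].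
  have h0 : X m (z * rho ^+ (L * m))%R = 0%N.
    apply/eqP; rewrite -leqn0 leqNgt; apply/negP => hpos.
    have /andP [_ h2] := cnt_abs _ _ _ _ _ (ltW hmu) hb _ _ _ hpos.
    have /andP [h1 _] := cnt_abs _ _ _ _ _ (ltW hmu) hb _ _ _ hz.
    rewrite normr1 mulr1 in h1 h2.
    rewrite normrM normrX exprM in h2.
    have h3 : (Mx / mu) ^+ m < (`|rho| ^+ L) ^+ m.
      have hMx : 0 <= Mx.
        have /andP[h1' h2'] := hb (Ordinal hn); apply: le_trans h2'; apply: le_trans h1'; exact: ltW.
      by rewrite ltrXn2r // ?divr_ge0 ?(ltW hmu) // -lt0n.
    have h4 : mu ^+ m * (Mx / mu) ^+ m = Mx ^+ m.
      by rewrite -exprMn mulrC divfK // gt_eqF.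
    have h5 : mu ^+ m * (Mx / mu) ^+ m < mu ^+ m * (`|rho| ^+ L) ^+ m.
      by rewrite ltr_pM2l // exprn_gt0.
    have h6 : mu ^+ m * (`|rho| ^+ L) ^+ m <= `|z| * (`|rho| ^+ L) ^+ m.
      by rewrite ler_wpM2r // exprn_ge0 // exprn_ge0.
    have := lt_le_trans (lt_le_trans h5 h6) h2; by rewrite h4 mulr1 ltxx.
  by have := iter m (L * m)%N z; rewrite h0.
have [m [hm hlt]] := arith n B L hB.
pose V := undup (map (fun f : {ffun 'I_n -> 'I_m.+1} => \prod_(k < n) r k ^+ (f k : nat)) (enum {ffun 'I_n -> 'I_m.+1})).
have hV : uniq V by apply: undup_uniq.
have hsub y : (0 < cntE r predT m 1 y)%N -> y \in V.
  move/cnt_supp => [c [hc ->]]; rewrite mul1r mem_undup.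
  apply/mapP; exists [ffun k => inord (c k)]; first by rewrite mem_enum.
  by apply: eq_bigr => k _; rewrite ffunE inordK // ltnS.
have hmass := cnt_mass n r m 1 V hV hsub.
have hsize : (size V <= m.+1 ^ n)%N.
  apply: leq_trans (size_undup _) _.
  by rewrite size_map -cardE card_ffun !card_ord.
have : (n ^ m <= m.+1 ^ n * (L * m * B ^ m))%N.
  rewrite -hmass; apply: leq_trans (leq_mul hsize (leqnn _)).
  rewrite -sum_const_seq; apply: leq_sum => y _; exact: bound.
by rewrite leqNgt hlt.
Qed.

Lemma key2 n (r : 'I_n -> rat) (hn : (0 < n)%N) (r0 : forall k, r k != 0) (B : nat) (hB : (B < n)%N)
  (x1 x2 : rat) (h1 : x1 != 0) (h2 : x2 != 0) (hlt : `|x2| < `|x1|)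
  (H : forall m y, (cntE r predT m x1 y <= cntE r predT m x2 y + B ^ m)%N) : False.
Proof.
apply: (key n r hn r0 B hB (x1 / x2)).
  rewrite normrM normrV ?unitfE // ltr_pdivlMr ?normr_gt0 // mul1r //.
move=> m z; have := H m (x1 * z).
have e1 : cntE r predT m x1 (x1 * z) = cntE r predT m 1 z.
  by rewrite -{1}[x1]mulr1 cntE_scale.
have e2 : cntE r predT m x2 (x1 * z) = cntE r predT m 1 (z * (x1 / x2)).
  rewrite -{1}[x2]mulr1 (_ : x1 * z = x2 * (z * (x1 / x2))) ?cntE_scale //.
  by field.
by rewrite e1 e2.
Qed.

Lemma flip_bound n (r : 'I_n -> rat) i j (hij : i != j) (hr : r j = - r i) m y :
  (cntE r predT m (r i) y <= cntE r predT m (r j) y + #|[pred k | (k != i) && (k != j)]| ^ m)%N.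
Proof.
apply: leq_trans (flip n r i j hij hr m (r i) y) _.
by rewrite hr leq_add2l cntE_bound.
Qed.


Theorem mainTheorem5 (n : nat) (hn : (0 < n)%N) (r : 'I_n -> rat)
  (r_inj : injective r) (r_n0 : forall i, r i != 0) (r_n1 : forall i, r i != 1)
  (R : M -> M -> Prop) (R_def : definable2 R)
  (R_spec : forall x y : M, x <> zeroM -> (R x y <-> exists i, y = scaleM (r i) x))
  (phi : M -> M) (phi_bij : bijective phi)
  (phi_R : forall a b : M, R a b <-> R (phi a) (phi b))
  (a : M) (ha : a <> zeroM) (s : {perm 'I_n})
  (hs : forall i, phi (scaleM (r i) a) = scaleM (r (s i)) (phi a))
  (i j : 'I_n) :
  `|r i| = `|r j| -> `|r (s i)| = `|r (s j)|.
Proof.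
case: (eqVneq i j) => [<- //|hij] hnorm.
have hrj : r j = - r i.
  move/eqP: hnorm; rewrite eqr_norm2 => /orP [/eqP /r_inj hE|/eqP ->]; last by rewrite opprK.
  by move: hij; rewrite hE eqxx.
have phi_inj := bij_inj phi_bij.
set p := phi a.
have hp : p <> zeroM.
  move=> hp0; have := hs i; rewrite -/p hp0 scaleM0v -hp0 => /phi_inj.
  rewrite -{2}[a]scaleM1 => /(scaleM_eq ha) /eqP; by rewrite (negPf (r_n1 i)).
pose Good x := x != 0 /\ exists y, y != 0 /\ phi (scaleM x a) = scaleM y p.
pose Psi x := epsilon (inhabits (0 : rat)) (fun y => phi (scaleM x a) = scaleM y p).
have PsiP x : Good x -> phi (scaleM x a) = scaleM (Psi x) p.
  move=> [_ [y [_ hy]]]; apply: (epsilon_spec (inhabits (0 : rat)) (fun y => phi (scaleM x a) = scaleM y p)).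
  by exists y.
have Psi_nz x : Good x -> Psi x != 0.
  move=> gx; have [_ [y [hy0 hy]]] := gx.
  by rewrite (scaleM_eq hp (etrans (esym (PsiP x gx)) hy)).
have phi_nz x : Good x -> phi (scaleM x a) <> zeroM.
  by move=> gx; rewrite PsiP //; apply: scaleM_nz => //; apply: Psi_nz.
have ua_nz x : x != 0 -> scaleM x a <> zeroM by move=> hx; apply: scaleM_nz.
have G0 x : Good x -> x != 0 by case.
have step x k : Good x -> Good (r k * x) /\ exists l, Psi (r k * x) = r l * Psi x.
  move=> gx; have hu := ua_nz x (G0 x gx).
  have R1 : R (scaleM x a) (scaleM (r k) (scaleM x a)) by apply/(R_spec _ _ hu); exists k.
  move/phi_R: R1; move/(R_spec _ _ (phi_nz x gx)) => [l hl].
  rewrite scaleM_scale (PsiP x gx) scaleM_scale in hl.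
  have g' : Good (r k * x).
    split; first by rewrite mulf_neq0 // G0.
    by exists (r l * Psi x); split => //; rewrite mulf_neq0 // Psi_nz.
  split => //; exists l; apply: (scaleM_eq hp).
  by rewrite -PsiP.
have G1 x k : Good x -> Good (r k * x) by move=> gx; case: (step x k gx).
have G3 x k : Good x -> exists l, Psi (r k * x) = r l * Psi x by move=> gx; case: (step x k gx).
have G2 x x' : Good x -> Good x' -> Psi x = Psi x' -> x = x'.
  move=> gx gx' he; apply: (scaleM_eq ha); apply: phi_inj.
  by rewrite !PsiP // he.
have G4 x l : Good x -> exists k, Psi (r k * x) = r l * Psi x.
  move=> gx; have hu := ua_nz x (G0 x gx).
  have R1 : R (phi (scaleM x a)) (scaleM (r l) (phi (scaleM x a))).
    by apply/(R_spec _ _ (phi_nz x gx)); exists l.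
  have [g gK Kg] := phi_bij.
  rewrite -[scaleM (r l) _]Kg in R1.
  have R2 : R (scaleM x a) (g (scaleM (r l) (phi (scaleM x a)))) by apply/phi_R.
  have [k hk] := (R_spec _ _ hu).1 R2.
  exists k; apply: (scaleM_eq hp); rewrite -PsiP; last exact: G1.
  rewrite -scaleM_scale -hk Kg PsiP // scaleM_scale //.
have Gr k : Good (r k) /\ Psi (r k) = r (s k).
  have g : Good (r k) by split => //; exists (r (s k)); split => //; rewrite hs.
  split => //; apply: (scaleM_eq hp); rewrite -PsiP //.
have T1 := transport n r r_inj Good Psi G0 G1 G2 G3.
have T2 := transport_ex n r Good Psi G1 G4.
have side i' j' : i' != j' -> r j' = - r i' -> forall m y',
   (cntE r predT m (r (s i')) y' <= cntE r predT m (r (s j')) y' + #|[pred k | (k != i') && (k != j')]| ^ m)%N.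
  move=> hij' hr' m y'; case: (posnP (cntE r predT m (r (s i')) y')) => [-> //|hpos].
  have [gi' Pi'] := Gr i'; have [gj' Pj'] := Gr j'.
  rewrite -Pi' in hpos; have [y [gy <-]] := T2 m (r i') y' gi' hpos.
  by rewrite -Pi' -Pj' !T1 //; apply: flip_bound.
have hB : (#|[pred k | (k != i) && (k != j)]| < n)%N.
  rewrite -[X in (_ < X)%N](card_ord n); apply: proper_card; apply/properP; split.
    by apply/subsetP.
  by exists i => //; rewrite inE eqxx.
have hcard : #|[pred k | (k != j) && (k != i)]| = #|[pred k | (k != i) && (k != j)]|.
  by apply: eq_card => k; rewrite !inE /= andbC.
have hri : r i = - r j by rewrite hrj opprK.
have H1 := side i j hij hrj.
have hji : j != i by rewrite eq_sym.
have H2 := side j i hji hri; rewrite hcard in H2.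
case: (ltgtP `|r (s i)| `|r (s j)|) => // h; exfalso.
  exact: (key2 n r hn r_n0 _ hB (r (s j)) (r (s i)) (r_n0 _) (r_n0 _) h H2).
exact: (key2 n r hn r_n0 _ hB (r (s i)) (r (s j)) (r_n0 _) (r_n0 _) h H1).
Qed.
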